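(* Let $q$ be a prime power, and let $m$ and $j$ be positive integers with $m>1$, $1\le j\le q^m-1$ and $\gcd(j,q^m-1)=1$. Let $\mu_j(x)=\sum_{i=0}^{m-1}x^{jq^i}=\mathrm{Tr}_{\mathbf{F}_{q^m}/\mathbf{F}_q}(x^j)$ and let $h(x)\in\mathbf{F}_q[x]$. Then $x\,h(\mu_j(x))$ is a permutation polynomial of $\mathbf{F}_{q^m}$ if and only if $h(0)\ne0$ and $x\,h(x)^j$ permutes $\mathbf{F}_q$.
   Context: $\mathrm{Tr}_{\mathbf{F}_{q^m}/\mathbf{F}_q}(x)=x+x^q+\cdots+x^{q^{m-1}}$. A permutation polynomial of a finite field $K$ is a polynomial inducing a bijection $K\to K$. *)

(* Defs.v *)
From HB Require Import structures.
From mathcomp Require Import all_boot all_order all_algebra.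
Set Implicit Arguments. Unset Strict Implicit. Unset Printing Implicit Defensive.
Import GRing.Theory.
Local Open Scope ring_scope.

(* The subfield F_q of a finite field L of order q^m: the fixed points of x |-> x^q. *)
Definition subFq (L : finFieldType) (q : nat) : {pred L} := [pred x | x ^+ q == x].

Definition trace_qm (L : finFieldType) (q m : nat) (y : L) : L :=
  \sum_(i < m) y ^+ (q ^ i).

Definition mu_j (L : finFieldType) (q m j : nat) (x : L) : L :=
  \sum_(i < m) x ^+ (j * q ^ i).

(* f permutes the subset A: maps A into A and is injective on A
   (equivalently, for finite A, induces a bijection A -> A). *)
Definition permutes_on (L : finFieldType) (A : {pred L}) (f : L -> L) : Prop :=
  {in A, forall x, f x \in A} /\ {in A &, injective f}.

(* Main.v *)
Require Import Defs.
From HB Require Import structures.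
From mathcomp Require Import all_boot all_order all_algebra all_field.
From mathcomp Require Import zify.
Import GRing.Theory.
Local Open Scope ring_scope.

Section S.
Variables (L : finFieldType) (q m : nat).
Hypothesis frD : forall x y : L, (x + y) ^+ q = x ^+ q + y ^+ q.
Hypothesis q_gt1 : (1 < q)%N.
Hypothesis hL : #|L| = (q ^ m)%N.
Hypothesis m_gt0 : (0 < m)%N.

Local Notation Q := (@subFq L q).

Lemma fr0 : (0 : L) ^+ q = 0.
Proof. by rewrite expr0n; case: q q_gt1. Qed.

Lemma frSum (I : Type) (r : seq I) (P : pred I) (F : I -> L) :
  (\sum_(i <- r | P i) F i) ^+ q = \sum_(i <- r | P i) F i ^+ q.
Proof. exact: (big_morph (fun x : L => x ^+ q) frD fr0). Qed.


Lemma Q0 : (0 : L) \in Q. Proof. by rewrite inE fr0. Qed.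
Lemma QD x y : x \in Q -> y \in Q -> x + y \in Q.
Proof. by rewrite !inE frD => /eqP -> /eqP ->. Qed.
Lemma QM x y : x \in Q -> y \in Q -> x * y \in Q.
Proof. by rewrite !inE exprMn => /eqP -> /eqP ->. Qed.
Lemma QX x n : x \in Q -> x ^+ n \in Q.
Proof. by rewrite !inE exprAC => /eqP ->. Qed.
Lemma QV x : x \in Q -> x^-1 \in Q.
Proof. by rewrite !inE exprVn => /eqP ->. Qed.

Lemma Qpow x i : x \in Q -> x ^+ (q ^ i) = x.
Proof.
rewrite inE => /eqP hx; elim: i => [|i IH]; first by rewrite expr1.
by rewrite expnSr exprM IH.
Qed.

Lemma Qhorner (h : {poly L}) a : h \is a polyOver Q -> a \in Q -> h.[a] \in Q.
Proof.
move=> /allP hh ha; rewrite horner_coef.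
apply: (big_ind (fun x => x \in Q)); [exact: Q0 | exact: QD |].
move=> i _; apply: QM; last exact: QX.
exact/hh/mem_nth.
Qed.

Lemma frpowD i (x y : L) : (x + y) ^+ (q ^ i) = x ^+ (q ^ i) + y ^+ (q ^ i).
Proof. by elim: i => [|i IH]; rewrite ?expr1 // expnSr !exprM IH frD. Qed.

Lemma frpow_card (y : L) : y ^+ (q ^ m) = y.
Proof. by rewrite -hL expf_card. Qed.

Lemma trQ y : trace_qm q m y \in Q.
Proof.
rewrite inE /trace_qm frSum; apply/eqP.
case: m m_gt0 frpow_card => // m' _ hc.
rewrite big_ord_recr /= big_ord_recl /= -exprM -expnSr hc expr1 addrC.
congr (_ + _); apply: eq_bigr => i _.
by rewrite -exprM -expnSr /bump leq0n add1n.
Qed.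
Lemma trZ d y : d \in Q -> trace_qm q m (d * y) = d * trace_qm q m y.
Proof.
move=> hd; rewrite /trace_qm mulr_sumr; apply: eq_bigr => i _.
by rewrite exprMn (Qpow _ _ hd).
Qed.

Lemma trB (x y : L) : trace_qm q m (x - y) = trace_qm q m x - trace_qm q m y.
Proof.
rewrite /trace_qm -sumrB; apply: eq_bigr => i _.
by rewrite -[in RHS](subrK y x) [in RHS]frpowD addrK.
Qed.


Lemma cardQ : (#|Q| <= q)%N.
Proof.
have sz : size ('X^q - 'X : {poly L}) = q.+1.
  by rewrite size_polyDl size_polyXn // size_polyN size_polyX ltnS.
have pn0 : ('X^q - 'X : {poly L}) != 0 by rewrite -size_poly_eq0 sz.
have := max_poly_roots pn0 _ (enum_uniq Q).
rewrite -cardE sz ltnS; apply; apply/allP => x; rewrite mem_enum inE => /eqP hx.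
by rewrite /root !hornerE hx subrr.
Qed.

Lemma tr_nz : exists y : L, trace_qm q m y != 0.
Proof.
apply/existsP; apply: contraT => /existsPn H0.
pose T : {poly L} := \sum_(i < m) 'X^(q ^ i).
have im : (m.-1 < m)%N by rewrite ltn_predL.
have hT : T`_(q ^ m.-1) = 1.
  rewrite /T coef_sum (bigD1 (Ordinal im)) //= coefXn eqxx big1 ?addr0 //.
  move=> i hi; rewrite coefXn eqn_exp2l //; move: hi; rewrite -val_eqE /= eq_sym.
  by move=> /negbTE ->.
have Tn0 : T != 0.
  by apply/eqP => T0; move: hT; rewrite T0 coef0 => /eqP; rewrite eq_sym oner_eq0.
have szT : (size T <= (q ^ m.-1).+1)%N.
  apply: leq_trans (size_sum _ _ _) _; apply/bigmax_leqP => i _.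
  by rewrite size_polyXn ltnS leq_pexp2l ?(ltnW q_gt1) // -ltnS prednK.
have := max_poly_roots Tn0 _ (enum_uniq L).
rewrite -cardE hL.
have -> : all (root T) (enum L).
  apply/allP => y _; rewrite /root /T horner_sum.
  have := H0 y; rewrite negbK /trace_qm; congr (_ == _); apply: eq_bigr => i _.
  by rewrite hornerXn.
move=> /(_ isT) /(leq_trans) /(_ szT).
rewrite -(prednK m_gt0) expnS prednK //.
have : (0 < q ^ m.-1)%N by rewrite expn_gt0 ltnW.
move: (q ^ m.-1)%N => X; move: q_gt1; clear; nia.
Qed.

Lemma tr_ker : (1 < m)%N -> exists2 x : L, x != 0 & trace_qm q m x = 0.
Proof.
move=> hm.
have [x /andP [hx ht]| H] := pickP (fun x : L => (x != 0) && (trace_qm q m x == 0)).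
  by exists x => //; apply/eqP.
have inj : injective (@trace_qm L q m).
  move=> a b e; apply/eqP; rewrite -subr_eq0.
  by apply: (contraFT _ (H (a - b))) => nz; rewrite nz trB e subrr eqxx.
have sub : [set trace_qm q m x | x : L] \subset Q.
  by apply/subsetP => _ /imsetP [x _ ->]; exact: trQ.
have := subset_leq_card sub; rewrite card_imset //.
have := cardQ; move=> h1 h2.
have := leq_trans h2 h1; rewrite hL -{2}(expn1 q) leq_exp2l //.
by rewrite leqNgt hm.
Qed.

End S.

Lemma root_j (L : finFieldType) (N j : nat) : #|L| = N.+1 -> coprime j N -> (0 < j)%N ->
  exists r, forall x : L, x ^+ (j * r) = x.
Proof.
move=> hL /(coprimeP _ _) hc j0; have [[u1 u2] /= e] := hc j0.
exists u1 => x.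
rewrite mulnC; move: e; move: (u1 * j)%N => a e.
have -> : a = ((u2 * N) + 1)%N by move: e; move: (u2 * N)%N; lia.
have [->|xn0] := eqVneq x 0; first by rewrite expr0n addn1.
have xN : x ^+ N = 1.
  apply: (mulIf xn0); rewrite mul1r -exprSr -hL; exact: expf_card.
by rewrite exprD mulnC exprM xN expr1n mul1r expr1.
Qed.

Theorem theorem3p2 (L : finFieldType) (q m j : nat)
  (hq : exists p k : nat, [/\ prime p, (0 < k)%N & q = (p ^ k)%N])
  (hL : #|L| = (q ^ m)%N)
  (hm : (1 < m)%N)
  (hj1 : (1 <= j)%N) (hj2 : (j <= q ^ m - 1)%N)
  (hjc : coprime j (q ^ m - 1))
  (h : {poly L}) (hh : h \is a polyOver (@subFq L q)) :
  permutes_on [pred _ | true] (fun x : L => x * h.[mu_j q m j x])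
  <-> (h.[0] != 0 /\ permutes_on (@subFq L q) (fun x : L => x * h.[x] ^+ j)).
Proof.
have [p [k [pp k0 qE]]] := hq.
have q_gt1 : (1 < q)%N by rewrite qE -{1}(expn0 p) ltn_exp2l ?prime_gt1.
have pch : p \in [pchar L].
  by apply: (card_finPcharP (n := (k * m)%N)) => //; rewrite hL qE expnM.
have frD : forall x y : L, (x + y) ^+ q = x ^+ q + y ^+ q.
  by move=> x y; apply: exprDn_pchar; rewrite qE pnatX pnatE // pch.
have m_gt0 : (0 < m)%N by apply: ltnW.
have hLN : #|L| = (q ^ m - 1).+1 by rewrite hL subn1 prednK // expn_gt0 ltnW.
have [r hr] := @root_j L _ _ hLN hjc hj1.
have rj : forall y : L, (y ^+ r) ^+ j = y by move=> y; rewrite -exprM mulnC hr.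
pose Q := @subFq L q.
pose mu := mu_j (L:=L) q m j.
pose Tr := @trace_qm L q m.
have muE : forall x, mu x = Tr (x ^+ j).
  by move=> x; rewrite /mu /mu_j /Tr /trace_qm; apply: eq_bigr => i _; rewrite exprM.
have muQ : forall x, mu x \in Q by move=> x; rewrite muE; exact: trQ.
pose f := fun x : L => x * h.[mu x].
pose g := fun x : L => x * h.[x] ^+ j.
have key : forall x, mu (f x) = g (mu x).
  move=> x; rewrite /f /g muE /Tr exprMn mulrC trZ //; last first.
    by apply: QX; apply: Qhorner.
  by rewrite -/Tr -muE mulrC.
have gQ : forall y, y \in Q -> g y \in Q.
  by move=> y hy; apply: QM => //; apply: QX; exact: Qhorner.
split.
- move=> [_ finj].
  have finj' : injective f by move=> a b; apply: finj.
  split.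
    apply/eqP => h0.
    have [x xn0 tx] := @tr_ker L q m frD q_gt1 hL m_gt0 hm.
    have zn0 : x ^+ r != 0.
      by apply: contraNneq xn0 => z0; rewrite -(rj x) z0 expr0n eqn0Ngt hj1.
    have : f (x ^+ r) = f 0.
      by rewrite /f mul0r muE rj /Tr tx h0 mulr0.
    by move/finj'; apply/eqP.
  split; first by move=> y hy; exact: gQ.
  have [c cn0] := @tr_nz L q m q_gt1 hL m_gt0.
  have [fi _ fK] := injF_bij finj'.
  apply/imset_injP; rewrite eqn_leq leq_imset_card /=.
  apply: subset_leq_card; apply/subsetP => a ha.
  pose y := a / Tr c * c.
  have Ty : Tr y = a.
    rewrite /y /Tr trZ // ?divfK //; apply: QM => //; apply: QV; exact: trQ.
  have mux : mu (y ^+ r) = a by rewrite muE rj.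
  have := key (fi (y ^+ r)); rewrite fK mux => ->.
  exact: imset_f.
- move=> [h0 [_ ginj]]; split => // a b _ _ e.
  have e2 : mu a = mu b.
    apply: ginj; rewrite ?muQ //.
    have ka := key a; have kb := key b; rewrite /f /g /= in ka kb.
    by rewrite -ka -kb /mu e.
  move: e; rewrite /mu in e2 *; rewrite -e2.
  have [hz|hnz] := eqVneq h.[mu a] 0; last exact: mulIf.
  have : g (mu a) = g 0 by rewrite /g /= hz expr0n eqn0Ngt hj1 mulr0 mul0r.
  move/ginj => /(_ (muQ a) (@Q0 L q q_gt1)) ma0.
  by move: h0; rewrite -{1}ma0 => /eqP/(_ hz).
Qed.
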